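(* Let $n\ge 1$ and let $\gamma: S^n\to\mathbb{R}_+$ be a continuous function. Then the Wulff shape $\mathcal{W}_\gamma\subset\mathbb{R}^{n+1}$ is self-dual, i.e. $\mathcal{W}_\gamma=\mathcal{DW}_\gamma$, if and only if the spherical convex body $\alpha_N^{-1}\circ Id(\mathcal{W}_\gamma)\subset S^{n+1}$ induced by $\mathcal{W}_\gamma$ is of constant width $\pi/2$.
   Context: $S^n$ is the unit sphere in $\mathbb{R}^{n+1}$, $\mathbb{R}_+$ the positive reals, and $x\cdot y$ the standard scalar product. For continuous $\gamma:S^n\to\mathbb{R}_+$, the Wulff shape is $\mathcal{W}_\gamma=\bigcap_{\theta\in S^n}\{x\in\mathbb{R}^{n+1}: x\cdot\theta\le\gamma(\theta)\}$; it is a convex body containing the origin in its interior. For each $\theta\in S^n$ the ray $\{r\theta: r>0\}$ meets $\partial\mathcal{W}_\gamma$ in exactly one point $w(\theta)\theta$ with $w(\theta)>0$. The dual Wulff shape is $\mathcal{DW}_\gamma=\mathcal{W}_{\overline{\gamma}}$ where $\overline{\gamma}(\theta)=1/w(-\theta)$; $\mathcal{W}_\gamma$ is self-dual if $\mathcal{W}_\gamma=\mathcal{DW}_\gamma$. On $S^{n+1}\subset\mathbb{R}^{n+2}$: for $P\in S^{n+1}$, $H(P)=\{Q\in S^{n+1}: P\cdot Q\ge 0\}$. A subset $\widetilde W\subset S^{n+1}$ is hemispherical if there is $P$ with $\widetilde W\cap H(P)=\emptyset$. For $P,Q\in S^{n+1}$, $P\neq -Q$, the arc $PQ=\{((1-t)P+tQ)/\|(1-t)P+tQ\|: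 t\in[0,1]\}$ and $|PQ|=\arccos(P\cdot Q)$ is its length. A hemispherical set is spherical convex if it contains the arc $PQ$ whenever it contains $P,Q$; a spherical convex body is a closed, spherical convex, hemispherical set with nonempty interior. $H(P)$ supports $\widetilde W$ if $\widetilde W\subset H(P)$ and $\partial\widetilde W\cap\partial H(P)\neq\emptyset$. For $P\neq\pm Q$, $H(P)\cap H(Q)$ is a lune with thickness $\Delta(H(P)\cap H(Q))=\pi-|PQ|$. For $H(P)$ supporting $\widetilde W$, $\mathrm{width}_{H(P)}\widetilde W$ is the minimum of $\Delta(H(P)\cap H(Q))$ over all $H(Q)$ supporting $\widetilde W$ with $\widetilde W\subset H(P)\cap H(Q)$. For $0<\rho<\pi$, $\widetilde W$ is of constant width $\rho$ if $\mathrm{width}_{H(P)}\widetilde W=\rho$ for every hemisphere $H(P)$ supporting $\widetilde W$. $N=(0,\dots,0,1)\in S^{n+1}$, $Id:\mathbb{R}^{n+1}\to\mathbb{R}^{n+1}\times\{1\}$, $Id(x)=(x,1)$, and $\alpha_N:\{P\in S^{n+1}: P_{n+2}>0\}\to\mathbb{R}^{n+1}\times\{1\}$ is the central projection $\alpha_N(P_1,\dots,P_{n+2})=(P_1/P_{n+2},\dots,P_{n+1}/P_{n+2},1)$. The spherical convex body induced by a Wulff shape $W$ is $\alpha_N^{-1}\circ Id(W)$. *)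

(* Defs.v *)
From Stdlib Require Import Reals Lra.
Open Scope R_scope.

(* Vectors of R^m are represented by functions nat -> R; only the
   coordinates 0..m-1 are ever inspected by the definitions below. *)
Definition vec := nat -> R.

Fixpoint dot (m : nat) (x y : vec) : R :=
  match m with
  | O => 0
  | S k => dot k x y + x k * y k
  end.

Definition vnorm (m : nat) (x : vec) : R := sqrt (dot m x x).
Definition vsub (x y : vec) : vec := fun i => x i - y i.
Definition vscal (r : R) (x : vec) : vec := fun i => r * x i.
Definition vopp (x : vec) : vec := fun i => - x i.

Definition veq (m : nat) (x y : vec) : Prop := forall i, (i < m)%nat -> x i = y i.

Definition on_sphere (m : nat) (x : vec) : Prop := dot m x x = 1.

Definition boundary (m : nat) (A : vec -> Prop) (p : vec) : Prop :=
  forall eps, 0 < eps ->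
    (exists y, vnorm m (vsub y p) < eps /\ A y) /\
    (exists y, vnorm m (vsub y p) < eps /\ ~ A y).

Definition sph_boundary (m : nat) (A : vec -> Prop) (p : vec) : Prop :=
  on_sphere m p /\
  forall eps, 0 < eps ->
    (exists y, on_sphere m y /\ vnorm m (vsub y p) < eps /\ A y) /\
    (exists y, on_sphere m y /\ vnorm m (vsub y p) < eps /\ ~ A y).

Definition cont_on_sphere (m : nat) (g : vec -> R) : Prop :=
  forall t, on_sphere m t -> forall eps, 0 < eps ->
    exists delta, 0 < delta /\
      forall t', on_sphere m t' -> vnorm m (vsub t' t) < delta ->
        Rabs (g t' - g t) < eps.

Definition Wulff (n : nat) (g : vec -> R) (x : vec) : Prop :=
  forall t, on_sphere (S n) t -> dot (S n) x t <= g t.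

(* Dual Wulff shape DW_gamma = W_{gbar}, gbar(t) = 1 / w(-t), where w(t) > 0
   is the (unique) number with w(t) t on the boundary of W_gamma. *)
Definition dual_Wulff (n : nat) (g : vec -> R) (x : vec) : Prop :=
  forall t, on_sphere (S n) t ->
    forall r, 0 < r -> boundary (S n) (Wulff n g) (vscal r (vopp t)) ->
      dot (S n) x t <= 1 / r.

Definition hemi (m : nat) (P : vec) (Q : vec) : Prop :=
  on_sphere m Q /\ 0 <= dot m P Q.

Definition arc_len (m : nat) (P Q : vec) : R := acos (dot m P Q).

Definition supports (m : nat) (Wt : vec -> Prop) (P : vec) : Prop :=
  on_sphere m P /\
  (forall Q, Wt Q -> hemi m P Q) /\
  exists Q, sph_boundary m Wt Q /\ sph_boundary m (hemi m P) Q.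

(* width_{H(P)} Wt = rho: minimum of Delta(H(P) cap H(Q)) = pi - |PQ| over
   supporting H(Q) with Wt subset H(P) cap H(Q) (a lune: P <> +-Q) equals rho *)
Definition width_eq (m : nat) (Wt : vec -> Prop) (P : vec) (rho : R) : Prop :=
  let adm Q := supports m Wt Q /\ (forall X, Wt X -> hemi m P X /\ hemi m Q X)
               /\ ~ veq m Q P /\ ~ veq m Q (vopp P) in
  (exists Q, adm Q /\ PI - arc_len m P Q = rho) /\
  (forall Q, adm Q -> rho <= PI - arc_len m P Q).

Definition constant_width (m : nat) (Wt : vec -> Prop) (rho : R) : Prop :=
  forall P, supports m Wt P -> width_eq m Wt P rho.

(* alpha_N^{-1} o Id (W) subset S^(n+1), N = e_(n+1) (0-based index n+1) *)
Definition induced (n : nat) (W : vec -> Prop) (P : vec) : Prop :=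
  on_sphere (S (S n)) P /\ 0 < P (S n) /\ W (fun i => P i / P (S n)).

(* Main.v *)
Require Import Defs.
From Stdlib Require Import Reals.
From Stdlib Require Import Lra Lia ZArith FunctionalExtensionality Classical ClassicalEpsilon.
Open Scope R_scope.

Lemma abs_le a b : Rabs a <= b -> -b <= a <= b.
Proof. unfold Rabs; destruct Rcase_abs; lra. Qed.

Lemma abs_lt a b : Rabs a < b -> -b < a < b.
Proof. unfold Rabs; destruct Rcase_abs; lra. Qed.

Lemma abs_le_intro a b : -b <= a <= b -> Rabs a <= b.
Proof. unfold Rabs; destruct Rcase_abs; lra. Qed.

Lemma dot_ext m x x' y y' : (forall i, (i < m)%nat -> x i = x' i /\ y i = y' i) ->
  dot m x y = dot m x' y'.
Proof.
  induction m; simpl; intros H; auto.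
  destruct (H m) as [E1 E2]; [lia|]. rewrite E1, E2, IHm; auto.
Qed.

Lemma dot_extl m x x' y : (forall i, (i < m)%nat -> x i = x' i) ->
  dot m x y = dot m x' y.
Proof. intros; apply dot_ext; intros; split; auto. Qed.

Lemma dot_comm m x y : dot m x y = dot m y x.
Proof. induction m; simpl; auto. rewrite IHm; ring. Qed.

Lemma dot_lin m a b x y z :
  dot m (fun i => a * x i + b * y i) z = a * dot m x z + b * dot m y z.
Proof. induction m; simpl. ring. rewrite IHm; ring. Qed.

Lemma dot_scal m a x z : dot m (fun i => a * x i) z = a * dot m x z.
Proof. induction m; simpl. ring. rewrite IHm; ring. Qed.

Lemma dot_sub m x y z : dot m (fun i => x i - y i) z = dot m x z - dot m y z.
Proof. induction m; simpl. ring. rewrite IHm; ring. Qed.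

Lemma dot_add m x y z : dot m (fun i => x i + y i) z = dot m x z + dot m y z.
Proof. induction m; simpl. ring. rewrite IHm; ring. Qed.

Lemma dot_nonneg m x : 0 <= dot m x x.
Proof. induction m; simpl. lra. nra. Qed.

Lemma dot_coord m x i : (i < m)%nat -> x i * x i <= dot m x x.
Proof.
  induction m; intros Hi; [lia|]. simpl.
  destruct (Nat.eq_dec i m). subst. pose proof (dot_nonneg m x). lra.
  assert (x i * x i <= dot m x x) by (apply IHm; lia). nra.
Qed.

Lemma dot_zero m x : dot m x x = 0 -> forall i, (i < m)%nat -> x i = 0.
Proof.
  intros H i Hi. pose proof (dot_coord m x i Hi). nra.
Qed.

Lemma dot_zero_l m x y : (forall i, (i < m)%nat -> x i = 0) -> dot m x y = 0.
Proof.
  induction m; simpl; intros H; auto. rewrite IHm by (intros; apply H; lia).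
  rewrite H by lia. ring.
Qed.

Lemma CS m x y : dot m x y * dot m x y <= dot m x x * dot m y y.
Proof.
  destruct (Req_dec (dot m y y) 0) as [H0|H0].
  - rewrite (dot_comm m x y), (dot_zero_l m y x) by (apply dot_zero; auto). 
    rewrite H0; lra.
  - pose proof (dot_nonneg m y).
    set (s := dot m x y / dot m y y).
    pose proof (dot_nonneg m (fun i => 1 * x i + (- s) * y i)) as Hq.
    rewrite dot_lin in Hq. rewrite !(dot_comm m _ (fun i => 1 * x i + (- s) * y i)) in Hq.
    rewrite !dot_lin in Hq. rewrite (dot_comm m y x) in Hq.
    unfold s in Hq. field_simplify in Hq; [|lra].
    assert (Hp: 0 < dot m y y) by lra.
    apply Rmult_le_compat_r with (r := dot m y y) in Hq; [|lra].
    unfold Rdiv in Hq. rewrite Rmult_assoc, Rinv_l in Hq by lra. lra.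
Qed.

Lemma CS_abs m x y : Rabs (dot m x y) <= vnorm m x * vnorm m y.
Proof.
  unfold vnorm. rewrite <- sqrt_mult by apply dot_nonneg.
  rewrite <- sqrt_Rsqr_abs. apply sqrt_le_1_alt. unfold Rsqr. apply CS.
Qed.

Lemma vnorm_nonneg m x : 0 <= vnorm m x.
Proof. apply sqrt_pos. Qed.

Lemma vnorm_sphere m x : on_sphere m x -> vnorm m x = 1.
Proof. unfold vnorm, on_sphere; intros ->; apply sqrt_1. Qed.

Lemma vnorm_lt m x e : 0 < e -> dot m x x < e * e -> vnorm m x < e.
Proof.
  intros He H. unfold vnorm. rewrite <- (sqrt_square e) by lra.
  apply sqrt_lt_1_alt; split; [apply dot_nonneg| exact H].
Qed.

Lemma vnorm_lt_inv m x e : vnorm m x < e -> dot m x x < e * e.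
Proof.
  unfold vnorm; intros H. pose proof (sqrt_pos (dot m x x)).
  pose proof (sqrt_sqrt _ (dot_nonneg m x)). nra.
Qed.

Lemma coord_le_norm m x i : (i < m)%nat -> Rabs (x i) <= vnorm m x.
Proof.
  intros Hi. unfold vnorm. rewrite <- sqrt_Rsqr_abs. apply sqrt_le_1_alt.
  unfold Rsqr. apply dot_coord; auto.
Qed.

Lemma vnorm_le_S m x : vnorm m x <= vnorm (S m) x.
Proof. unfold vnorm. apply sqrt_le_1_alt. simpl. nra. Qed.

Lemma dot_sphere_bound m x y : on_sphere m x -> on_sphere m y -> -1 <= dot m x y <= 1.
Proof.
  intros Hx Hy. pose proof (CS_abs m x y). rewrite !vnorm_sphere in H by auto.
  apply abs_le in H. lra.
Qed.

Lemma dot_diff_bound m P Y Q : on_sphere m P ->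
  Rabs (dot m P Y - dot m P Q) <= vnorm m (vsub Y Q).
Proof.
  intros HP. rewrite !(dot_comm m P). rewrite <- dot_sub.
  pose proof (CS_abs m (vsub Y Q) P) as H. rewrite (vnorm_sphere m P) in H by auto.
  rewrite Rmult_1_r in H. unfold vsub in *. exact H.
Qed.

Lemma inv_small eps : 0 < eps -> exists N, forall n, (N <= n)%nat -> / INR (S n) < eps.
Proof.
  intros He. destruct (archimed (/ eps)) as [H1 _].
  assert (0 <= IZR (up (/ eps))). { pose proof (Rinv_0_lt_compat eps He). lra. }
  exists (Z.to_nat (up (/eps))). intros n Hn.
  assert (INR (Z.to_nat (up (/ eps))) = IZR (up (/ eps))).
  { rewrite INR_IZR_INZ. rewrite Z2Nat.id; auto. apply le_IZR; auto. }
  apply le_INR in Hn. rewrite S_INR.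
  assert (/ eps < INR n + 1) by lra.
  assert (0 < INR n + 1) by (pose proof (pos_INR n); lra).
  assert (/ (INR n + 1) < / / eps).
  { apply Rinv_lt_contravar; [|lra]. apply Rmult_lt_0_compat; auto; apply Rinv_0_lt_compat; auto. }
  rewrite Rinv_inv in H4. lra.
Qed.

Definition smono (psi : nat -> nat) := forall j, (psi j < psi (S j))%nat.

Lemma smono_ge psi : smono psi -> forall j, (j <= psi j)%nat.
Proof. intros H j; induction j; [lia|]. specialize (H j). lia. Qed.

Lemma smono_le psi : smono psi -> forall a b, (a <= b)%nat -> (psi a <= psi b)%nat.
Proof. intros H a b Hab; induction Hab; auto. specialize (H m). lia. Qed.

Lemma smono_comp f h : smono f -> smono h -> smono (fun j => f (h j)).
Proof.
  intros Hf Hh j. specialize (Hh j).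
  assert (forall a b, (a < b)%nat -> (f a < f b)%nat).
  { intros a b Hab. induction Hab. apply Hf. specialize (Hf m). lia. }
  apply H; auto.
Qed.

Lemma sub_cv w L psi : Un_cv w L -> smono psi -> Un_cv (fun j => w (psi j)) L.
Proof.
  intros Hw Hp eps He. destruct (Hw eps He) as [N HN]. exists N.
  intros n Hn. apply HN. pose proof (smono_ge psi Hp n). lia.
Qed.

Lemma BW1 (v : nat -> R) M : (forall j, Rabs (v j) <= M) ->
  exists psi, smono psi /\ exists a, Un_cv (fun j => v (psi j)) a.
Proof.
  intros Hb.
  destruct (Bolzano_Weierstrass v (fun c => -M <= c <= M) (compact_P3 (-M) M)) as [a Ha].
  { intros j. apply abs_le; auto. }
  assert (F: forall N j, {p | (N <= p)%nat /\ Rabs (v p - a) < / INR (S j)}).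
  { intros N j. apply constructive_indefinite_description.
    assert (Hpos: 0 < / INR (S j)) by (apply Rinv_0_lt_compat; apply lt_0_INR; lia).
    destruct (Ha (disc a (mkposreal _ Hpos)) N) as [p [Hp1 Hp2]].
    { exists (mkposreal _ Hpos). intros x Hx; exact Hx. }
    exists p. split; auto. }
  set (psi := fix psi j := match j with O => proj1_sig (F 0%nat 0%nat)
                           | S j' => proj1_sig (F (S (psi j')) (S j')) end).
  assert (Hpsi: forall j, Rabs (v (psi j) - a) < / INR (S j)).
  { intros [|j]; simpl; [exact (proj2 (proj2_sig (F 0%nat 0%nat)))|].
    exact (proj2 (proj2_sig (F _ _))). }
  exists psi. split.
  - intros j. change (psi (S j)) with (proj1_sig (F (S (psi j)) (S j))). destruct (proj2_sig (F (S (psi j)) (S j))). lia.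
  - exists a. intros eps He. destruct (inv_small eps He) as [N HN]. exists N.
    intros n Hn. unfold R_dist. specialize (HN n Hn). specialize (Hpsi n). lra.
Qed.

Lemma BWk k (u : nat -> vec) M : (forall j i, (i < k)%nat -> Rabs (u j i) <= M) ->
  exists psi, smono psi /\ exists l : vec, forall i, (i < k)%nat ->
    Un_cv (fun j => u (psi j) i) (l i).
Proof.
  revert u. induction k; intros u Hb.
  - exists (fun j => j). split. intros j; lia. exists (fun _ => 0). intros; lia.
  - destruct (IHk u) as [phi [Hphi [l Hl]]]. { intros; apply Hb; lia. }
    destruct (BW1 (fun j => u (phi j) k) M) as [psi [Hpsi [a Ha]]].
    { intros; apply Hb; lia. }
    exists (fun j => phi (psi j)). split. apply smono_comp; auto.
    exists (fun i => if Nat.eq_dec i k then a else l i). intros i Hi.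
    destruct (Nat.eq_dec i k). subst; exact Ha.
    apply (sub_cv (fun j => u (phi j) i)); auto. apply Hl; lia.
Qed.

Lemma dot_cv m (a b : nat -> vec) x y :
  (forall i, (i < m)%nat -> Un_cv (fun j => a j i) (x i)) ->
  (forall i, (i < m)%nat -> Un_cv (fun j => b j i) (y i)) ->
  Un_cv (fun j => dot m (a j) (b j)) (dot m x y).
Proof.
  induction m; intros Ha Hb; simpl.
  - intros eps He; exists O; intros; unfold R_dist; rewrite Rminus_0_r, Rabs_R0; auto.
  - apply CV_plus. apply IHm; intros; [apply Ha|apply Hb]; lia.
    apply CV_mult; [apply Ha|apply Hb]; lia.
Qed.

Lemma norm_cv m (a : nat -> vec) x :
  (forall i, (i < m)%nat -> Un_cv (fun j => a j i) (x i)) ->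
  forall eps, 0 < eps -> exists N, forall j, (N <= j)%nat -> vnorm m (vsub (a j) x) < eps.
Proof.
  intros Ha eps He.
  assert (H: Un_cv (fun j => dot m (vsub (a j) x) (vsub (a j) x)) (dot m (vsub x x) (vsub x x))).
  { apply dot_cv; intros i Hi; unfold vsub; apply CV_minus; auto;
      intros e He'; exists O; intros; unfold R_dist; rewrite Rminus_diag, Rabs_R0; auto. }
  rewrite (dot_zero_l m (vsub x x)) in H by (intros; unfold vsub; ring).
  destruct (H (eps*eps) ltac:(nra)) as [N HN]. exists N. intros j Hj.
  apply vnorm_lt; auto. specialize (HN j Hj). unfold R_dist in HN.
  rewrite Rminus_0_r in HN. apply abs_lt in HN. lra.
Qed.

Lemma cv_const c : Un_cv (fun _ => c) c.
Proof. intros e He; exists O; intros; unfold R_dist; rewrite Rminus_diag, Rabs_R0; auto. Qed.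

Lemma nat_big x : exists N, forall j, (N <= j)%nat -> x < INR j.
Proof.
  destruct (Rle_or_lt x 0).
  - exists 1%nat. intros j Hj. apply le_INR in Hj. simpl in Hj. lra.
  - destruct (inv_small (/ x)) as [N HN]. apply Rinv_0_lt_compat; auto.
    exists (S N). intros j Hj. destruct j as [|j]; [lia|].
    specialize (HN j ltac:(lia)).
    assert (0 < INR (S j)) by (apply lt_0_INR; lia).
    assert (/ / x < / / INR (S j)).
    { apply Rinv_lt_contravar; auto. apply Rmult_lt_0_compat; apply Rinv_0_lt_compat; lra. }
    rewrite !Rinv_inv in H1. lra.
Qed.

Lemma G_ext n g a b : (forall i, (i < S n)%nat -> a i = b i) -> Wulff n g a -> Wulff n g b.
Proof.
  intros E H t Ht. rewrite <- (dot_extl (S n) a b t); auto.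
Qed.

Lemma G_closed n g p :
  (forall eps, 0 < eps -> exists y, vnorm (S n) (vsub y p) < eps /\ Wulff n g y) ->
  Wulff n g p.
Proof.
  intros H t Ht. apply Rnot_lt_le; intros Hc.
  destruct (H (dot (S n) p t - g t) ltac:(lra)) as [y [Hy1 Hy2]].
  specialize (Hy2 t Ht). pose proof (dot_diff_bound (S n) t y p Ht).
  rewrite !(dot_comm (S n) t) in H0. apply abs_le in H0. lra.
Qed.

Lemma G0 n g (gpos : forall t, on_sphere (S n) t -> 0 < g t) : Wulff n g (fun _ => 0).
Proof.
  intros t Ht. rewrite dot_zero_l by auto. apply Rlt_le, gpos; auto.
Qed.

Definition normz m (x : vec) : vec := vscal (/ vnorm m x) x.

Lemma dot_self_norm m x : dot m x x = vnorm m x * vnorm m x.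
Proof. unfold vnorm. rewrite sqrt_sqrt; auto. apply dot_nonneg. Qed.

Lemma normz_sphere m x : 0 < vnorm m x -> on_sphere m (normz m x).
Proof.
  intros H. unfold on_sphere, normz, vscal. rewrite dot_scal, dot_comm, dot_scal.
  rewrite dot_self_norm. field. lra.
Qed.

Lemma normz_dot m x : 0 < vnorm m x -> dot m x (normz m x) = vnorm m x.
Proof.
  intros H. unfold normz, vscal. rewrite dot_comm, dot_scal, dot_self_norm. field. lra.
Qed.

Lemma vnorm_pos m x : 0 < dot m x x -> 0 < vnorm m x.
Proof. intros H. unfold vnorm. apply sqrt_lt_R0; auto. Qed.

Lemma vnorm_zero m x : vnorm m x = 0 -> dot m x x = 0.
Proof. intros H. rewrite dot_self_norm, H. ring. Qed.

Lemma sphere_coord_bound m t : on_sphere m t -> forall i, (i < m)%nat -> Rabs (t i) <= 1.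
Proof. intros H i Hi. rewrite <- (vnorm_sphere m t H). apply coord_le_norm; auto. Qed.

Lemma g_sub n g (gcont : cont_on_sphere (S n) g) (t : nat -> vec) :
  (forall j, on_sphere (S n) (t j)) ->
  exists phi, smono phi /\ exists l, on_sphere (S n) l /\
    forall eps, 0 < eps -> exists N, forall j, (N <= j)%nat -> Rabs (g (t (phi j)) - g l) < eps.
Proof.
  intros Ht. destruct (BWk (S n) t 1) as [phi [Hphi [l Hl]]].
  { intros j i Hi. apply (sphere_coord_bound (S n)); auto. }
  assert (Hls: on_sphere (S n) l).
  { pose proof (dot_cv (S n) (fun j => t (phi j)) (fun j => t (phi j)) l l Hl Hl).
    apply (UL_sequence (fun j => dot (S n) (t (phi j)) (t (phi j)))); auto.
    intros e He; exists O; intros j _. unfold R_dist. rewrite (Ht (phi j)).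
    rewrite Rminus_diag, Rabs_R0; auto. }
  exists phi. split; auto. exists l. split; auto.
  intros eps He. destruct (gcont l Hls eps He) as [d [Hd Hd2]].
  destruct (norm_cv (S n) (fun j => t (phi j)) l Hl d Hd) as [N HN].
  exists N. intros j Hj. apply Hd2; auto.
Qed.

Lemma gmin n g (gpos : forall t, on_sphere (S n) t -> 0 < g t)
  (gcont : cont_on_sphere (S n) g) :
  exists c, 0 < c /\ forall t, on_sphere (S n) t -> c <= g t.
Proof.
  apply NNPP; intros Hn.
  assert (F: forall j : nat, {t | on_sphere (S n) t /\ g t < / INR (S j)}).
  { intros j. apply constructive_indefinite_description. apply NNPP; intros Hj.
    apply Hn. exists (/ INR (S j)). split. apply Rinv_0_lt_compat, lt_0_INR; lia.
    intros t Ht. apply Rnot_lt_le; intros Hc. apply Hj; exists t; auto. }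
  destruct (g_sub n g gcont (fun j => proj1_sig (F j))) as [phi [Hphi [l [Hl Hc]]]].
  { intros j; exact (proj1 (proj2_sig (F j))). }
  pose proof (gpos l Hl).
  destruct (Hc (g l / 2) ltac:(lra)) as [N1 HN1].
  destruct (inv_small (g l / 2) ltac:(lra)) as [N2 HN2].
  set (j := max N1 N2).
  specialize (HN1 j ltac:(lia)). 
  specialize (HN2 (phi j) ltac:(pose proof (smono_ge phi Hphi j); lia)).
  pose proof (proj2 (proj2_sig (F (phi j)))) as H0.
  apply abs_lt in HN1. lra.
Qed.

Lemma gmax n g (gcont : cont_on_sphere (S n) g) :
  exists M, forall t, on_sphere (S n) t -> g t <= M.
Proof.
  apply NNPP; intros Hn.
  assert (F: forall j : nat, {t | on_sphere (S n) t /\ INR j < g t}).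
  { intros j. apply constructive_indefinite_description. apply NNPP; intros Hj.
    apply Hn. exists (INR j).
    intros t Ht. apply Rnot_lt_le; intros Hc. apply Hj; exists t; auto. }
  destruct (g_sub n g gcont (fun j => proj1_sig (F j))) as [phi [Hphi [l [Hl Hc]]]].
  { intros j; exact (proj1 (proj2_sig (F j))). }
  destruct (Hc 1 ltac:(lra)) as [N1 HN1].
  destruct (nat_big (g l + 1)) as [N2 HN2].
  set (j := max N1 N2).
  specialize (HN1 j ltac:(lia)).
  specialize (HN2 (phi j) ltac:(pose proof (smono_ge phi Hphi j); lia)).
  pose proof (proj2 (proj2_sig (F (phi j)))) as H0.
  apply abs_lt in HN1. lra.
Qed.

Lemma ball0 n g (gpos : forall t, on_sphere (S n) t -> 0 < g t)
  (gcont : cont_on_sphere (S n) g) :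
  exists d, 0 < d /\ forall y, vnorm (S n) y <= d -> Wulff n g y.
Proof.
  destruct (gmin n g gpos gcont) as [c [Hc Hc2]]. exists c. split; auto.
  intros y Hy t Ht. pose proof (CS_abs (S n) y t). rewrite (vnorm_sphere _ t Ht) in H.
  apply abs_le in H. specialize (Hc2 t Ht). lra.
Qed.

Lemma Gbound n g (gcont : cont_on_sphere (S n) g) :
  exists M, 0 <= M /\ forall y, Wulff n g y -> vnorm (S n) y <= M.
Proof.
  destruct (gmax n g gcont) as [M HM]. exists (Rmax M 0). split. apply Rmax_r.
  intros y Hy. destruct (Req_dec (vnorm (S n) y) 0) as [E|E].
  - rewrite E. apply Rmax_r.
  - assert (Hp: 0 < vnorm (S n) y) by (pose proof (vnorm_nonneg (S n) y); lra).
    specialize (Hy _ (normz_sphere _ _ Hp)). rewrite normz_dot in Hy by auto.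
    specialize (HM _ (normz_sphere _ _ Hp)). pose proof (Rmax_l M 0). lra.
Qed.

Lemma MIN n g (gpos : forall t, on_sphere (S n) t -> 0 < g t)
  (gcont : cont_on_sphere (S n) g) z :
  exists y0, Wulff n g y0 /\ forall y, Wulff n g y -> dot (S n) y0 z <= dot (S n) y z.
Proof.
  destruct (Gbound n g gcont) as [M [HM0 HM]].
  set (E := fun r => exists y, Wulff n g y /\ r = - dot (S n) y z).
  destruct (completeness E) as [s [Hs1 Hs2]].
  { exists (M * vnorm (S n) z). intros r [y [Hy ->]].
    pose proof (CS_abs (S n) y z). apply abs_le in H. specialize (HM y Hy).
    pose proof (vnorm_nonneg (S n) z). nra. }
  { exists (- dot (S n) (fun _ => 0) z). exists (fun _ => 0); split; auto. apply G0; auto. }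
  assert (F: forall j : nat, {y | Wulff n g y /\ s - / INR (S j) < - dot (S n) y z}).
  { intros j. apply constructive_indefinite_description. apply NNPP; intros Hj.
    assert (Hpos: 0 < / INR (S j)) by (apply Rinv_0_lt_compat, lt_0_INR; lia).
    assert (s <= s - / INR (S j)); [|lra].
    apply Hs2. intros r [y [Hy ->]]. apply Rnot_lt_le; intros Hc. apply Hj. exists y; auto. }
  destruct (BWk (S n) (fun j => proj1_sig (F j)) M) as [phi [Hphi [l Hl]]].
  { intros j i Hi. eapply Rle_trans. apply (coord_le_norm (S n)); auto.
    apply HM. exact (proj1 (proj2_sig (F j))). }
  assert (Gl: Wulff n g l).
  { apply G_closed. intros eps He.
    destruct (norm_cv _ _ _ Hl eps He) as [N HN]. exists (proj1_sig (F (phi N))).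
    split. apply HN; lia. exact (proj1 (proj2_sig (F (phi N)))). }
  exists l. split; auto.
  assert (Hlz: dot (S n) l z <= - s).
  { apply Rnot_lt_le; intros Hc.
    set (e := (dot (S n) l z + s) / 2).
    assert (He: 0 < e) by (unfold e; lra).
    assert (Hcv := dot_cv (S n) (fun j => proj1_sig (F (phi j))) (fun _ => z) l z Hl
      (fun i _ => cv_const (z i))).
    destruct (Hcv e He) as [N1 HN1]. destruct (inv_small e He) as [N2 HN2].
    set (j := max N1 N2). specialize (HN1 j ltac:(lia)).
    specialize (HN2 (phi j) ltac:(pose proof (smono_ge phi Hphi j); lia)).
    pose proof (proj2 (proj2_sig (F (phi j)))). unfold R_dist in HN1.
    apply abs_lt in HN1. unfold e in *. lra. }
  intros y Hy. assert (- dot (S n) y z <= s) by (apply Hs1; exists y; auto). lra.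
Qed.

Definition Dp n g (x : vec) := forall y, Wulff n g y -> -1 <= dot (S n) x y.

Lemma dot_opp_l m x y : dot m (vopp x) y = - dot m x y.
Proof. induction m; simpl. ring. unfold vopp in *. rewrite IHm. ring. Qed.

Lemma dot_vscal_l m a x y : dot m (vscal a x) y = a * dot m x y.
Proof. unfold vscal. apply dot_scal. Qed.

Lemma vnorm_scal_diff m a b v : vnorm m (vsub (vscal a v) (vscal b v)) = Rabs (a - b) * vnorm m v.
Proof.
  replace (vsub (vscal a v) (vscal b v)) with (fun i => (a - b) * v i)
    by (apply functional_extensionality; intros; unfold vsub, vscal; ring).
  unfold vnorm. rewrite dot_scal, dot_comm, dot_scal, <- Rmult_assoc.
  rewrite sqrt_mult_alt by (pose proof (Rle_0_sqr (a-b)); unfold Rsqr in *; lra). rewrite <- Rsqr_def. rewrite sqrt_Rsqr_abs. auto.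
Qed.

Lemma vnorm_self m p : vnorm m (vsub p p) = 0.
Proof.
  unfold vnorm. rewrite dot_zero_l. apply sqrt_0. intros; unfold vsub; ring.
Qed.

Lemma dual_to_Dp n g (gpos : forall t, on_sphere (S n) t -> 0 < g t) x :
  dual_Wulff n g x -> Dp n g x.
Proof.
  intros HD y Hy.
  destruct (Req_dec (vnorm (S n) y) 0) as [E0|E0].
  - pose proof (CS_abs (S n) x y). rewrite E0, Rmult_0_r in H.
    apply abs_le in H. lra.
  - assert (Hp: 0 < vnorm (S n) y) by (pose proof (vnorm_nonneg (S n) y); lra).
    set (yh := normz (S n) y).
    assert (Hyh: on_sphere (S n) yh) by (apply normz_sphere; auto).
    assert (Eyv: forall i, vscal (vnorm (S n) y) yh i = y i).
    { intros i. unfold yh, normz, vscal. field. lra. }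
    set (E := fun r => 0 <= r /\ Wulff n g (vscal r yh)).
    destruct (completeness E) as [r [Hr1 Hr2]].
    { exists (g yh). intros rho [H0 H1]. specialize (H1 yh Hyh).
      rewrite dot_vscal_l, Hyh, Rmult_1_r in H1. auto. }
    { exists (vnorm (S n) y). split. lra. apply (G_ext n g y); auto. }
    assert (Hry: vnorm (S n) y <= r).
    { apply Hr1. split. lra. apply (G_ext n g y); auto. }
    assert (HG: Wulff n g (vscal r yh)).
    { apply G_closed. intros eps He.
      assert (exists rho, E rho /\ r - eps < rho) as [rho [Hrho1 Hrho2]].
      { apply NNPP; intros Hc. assert (r <= r - eps); [|lra]. apply Hr2.
        intros rho Hrho. apply Rnot_lt_le; intros Hc2. apply Hc; exists rho; auto. }
      exists (vscal rho yh). split; [|apply Hrho1].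
      rewrite vnorm_scal_diff, (vnorm_sphere _ _ Hyh).
      assert (rho <= r) by (apply Hr1; auto).
      rewrite Rabs_left1 by lra. lra. }
    assert (Hb: boundary (S n) (Wulff n g) (vscal r (vopp (vopp yh)))).
    { replace (vscal r (vopp (vopp yh))) with (vscal r yh)
        by (apply functional_extensionality; intros; unfold vscal, vopp; ring).
      intros eps He. split.
      - exists (vscal r yh). rewrite vnorm_self. auto.
      - exists (vscal (r + eps / 2) yh). split.
        + rewrite vnorm_scal_diff, (vnorm_sphere _ _ Hyh). rewrite Rabs_right by lra. lra.
        + intros Hc. assert (r + eps / 2 <= r); [|lra]. apply Hr1. split; auto. lra. }
    assert (Hs: on_sphere (S n) (vopp yh)).
    { unfold on_sphere. rewrite dot_opp_l, dot_comm, dot_opp_l. rewrite Hyh. ring. }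
    specialize (HD _ Hs r ltac:(lra) Hb).
    rewrite dot_comm, dot_opp_l, dot_comm in HD.
    rewrite (dot_comm (S n) x y), (dot_extl (S n) y (vscal (vnorm (S n) y) yh) x) by (intros; rewrite Eyv; auto).
    rewrite dot_vscal_l, (dot_comm (S n) yh x).
    assert (- / r <= dot (S n) x yh) by (unfold Rdiv in HD; lra).
    assert (0 < / r) by (apply Rinv_0_lt_compat; lra).
    assert (vnorm (S n) y * / r <= 1).
    { apply (Rmult_le_reg_r r); [lra|]. rewrite Rmult_assoc, Rinv_l by lra. lra. }
    nra.
Qed.

Lemma Dp_to_dual n g x : Dp n g x -> dual_Wulff n g x.
Proof.
  intros HD t Ht r Hr Hb.
  assert (HG: Wulff n g (vscal r (vopp t))).
  { apply G_closed. intros eps He. destruct (Hb eps He) as [[y Hy] _]. exists y; auto. }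
  specialize (HD _ HG). rewrite dot_comm, dot_vscal_l, dot_opp_l, dot_comm in HD.
  unfold Rdiv. rewrite Rmult_1_l.
  apply (Rmult_le_reg_l r); auto. rewrite Rinv_r by lra. lra.
Qed.

Lemma acos_ge d : -1 <= d <= 1 -> (PI / 2 <= PI - acos d <-> 0 <= d).
Proof.
  intros Hd. rewrite acos_asin by auto. pose proof (asin_bound d). pose proof PI_RGT_0.
  rewrite <- (sin_asin d) at 2 by auto. split; intros Hx.
  - apply sin_ge_0; lra.
  - apply Rnot_lt_le; intros Hc. assert (sin (asin d) < 0) by (apply sin_lt_0_var; lra). lra.
Qed.

Lemma acos_eq d : -1 <= d <= 1 -> PI - acos d = PI / 2 -> d = 0.
Proof.
  intros Hd H. rewrite <- (cos_acos d) by auto. replace (acos d) with (PI/2) by lra.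
  apply cos_PI2.
Qed.

Lemma dot_lin2 m a b c d x y :
  dot m (fun i => a * x i + b * y i) (fun i => c * x i + d * y i) =
  a * c * dot m x x + (a * d + b * c) * dot m x y + b * d * dot m y y.
Proof.
  rewrite dot_lin, !(dot_comm m _ (fun i => c * x i + d * y i)), !dot_lin.
  rewrite (dot_comm m y x). ring.
Qed.

Lemma outpoint m P Q : on_sphere m P -> on_sphere m Q -> dot m P Q = 0 ->
  forall eps, 0 < eps -> exists Y, on_sphere m Y /\ vnorm m (vsub Y Q) < eps /\ dot m P Y < 0.
Proof.
  intros HP HQ H0 eps He.
  set (s := Rmin (1/2) (eps/2)).
  assert (Hs: 0 < s <= 1/2 /\ s <= eps / 2).
  { unfold s. split; [split|]. apply Rmin_pos; lra. apply Rmin_l. apply Rmin_r. }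
  set (a := sqrt (1 - s * s)).
  assert (Ha2: a * a = 1 - s * s) by (unfold a; apply sqrt_sqrt; nra).
  assert (Ha: 1 - s * s <= a).
  { assert (0 <= a) by apply sqrt_pos. assert (a <= 1).
    { unfold a. apply Rle_trans with (sqrt 1). apply sqrt_le_1_alt; nra. rewrite sqrt_1; lra. } nra. }
  rewrite dot_comm in H0.
  exists (fun i => a * Q i + (- s) * P i). split; [|split].
  - unfold on_sphere. rewrite dot_lin2, HQ, HP, H0. nra.
  - replace (vsub (fun i => a * Q i + - s * P i) Q) with (fun i => (a - 1) * Q i + (- s) * P i)
      by (apply functional_extensionality; intros; unfold vsub; ring).
    apply vnorm_lt; auto. rewrite dot_lin2, HQ, HP, H0. nra.
  - rewrite dot_comm, dot_lin, H0, HP. nra.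
Qed.

Lemma bnd_hemi_zero m P Q : on_sphere m P -> sph_boundary m (hemi m P) Q ->
  0 <= dot m P Q -> dot m P Q = 0.
Proof.
  intros HP [HQ Hb] H. destruct (Req_dec (dot m P Q) 0); auto.
  destruct (Hb (dot m P Q) ltac:(lra)) as [_ [Y [HY1 [HY2 HY3]]]].
  exfalso. apply HY3. split; auto.
  pose proof (dot_diff_bound m P Y Q HP). apply abs_le in H1. lra.
Qed.

Definition cst n (x : vec) := / sqrt (1 + dot (S n) x x).
Definition hatv n (x : vec) : vec :=
  fun i => if Nat.eq_dec i (S n) then cst n x else cst n x * x i.
Definition proj n (P : vec) : vec := fun i => P i / P (S n).

Lemma cst_pos n x : 0 < cst n x.
Proof. unfold cst. apply Rinv_0_lt_compat, sqrt_lt_R0. pose proof (dot_nonneg (S n) x). lra. Qed.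

Lemma cst_sq n x : cst n x * cst n x * (1 + dot (S n) x x) = 1.
Proof.
  unfold cst. pose proof (dot_nonneg (S n) x).
  rewrite <- Rinv_mult, sqrt_sqrt by lra. field. lra.
Qed.

Lemma hat_k n x : hatv n x (S n) = cst n x.
Proof. unfold hatv. destruct Nat.eq_dec; [auto|lia]. Qed.

Lemma hat_lt n x i : (i < S n)%nat -> hatv n x i = cst n x * x i.
Proof. intros Hi. unfold hatv. destruct Nat.eq_dec; [lia|auto]. Qed.

Lemma hat_proj n x i : (i < S n)%nat -> proj n (hatv n x) i = x i.
Proof.
  intros Hi. unfold proj. rewrite hat_k, hat_lt by auto. pose proof (cst_pos n x). field. lra.
Qed.

Lemma hat_dotk n x y : dot (S n) (hatv n x) y = cst n x * dot (S n) x y.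
Proof. rewrite <- dot_scal. apply dot_extl. intros; apply hat_lt; auto. Qed.

Lemma hat_sphere n x : on_sphere (S (S n)) (hatv n x).
Proof.
  unfold on_sphere. change (dot (S (S n)) (hatv n x) (hatv n x)) with
    (dot (S n) (hatv n x) (hatv n x) + hatv n x (S n) * hatv n x (S n)).
  rewrite hat_k, hat_dotk, dot_comm, hat_dotk. pose proof (cst_sq n x). nra.
Qed.

Lemma dot_proj n X Y : X (S n) <> 0 -> Y (S n) <> 0 ->
  dot (S (S n)) X Y = X (S n) * Y (S n) * (dot (S n) (proj n X) (proj n Y) + 1).
Proof.
  intros HX HY. change (dot (S (S n)) X Y) with (dot (S n) X Y + X (S n) * Y (S n)).
  rewrite (dot_ext (S n) X (fun i => X (S n) * proj n X i) Y (fun i => Y (S n) * proj n Y i)).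
  - rewrite dot_scal, dot_comm, dot_scal, dot_comm. ring.
  - intros i Hi. unfold proj. split; field; auto.
Qed.

Definition Tset n g := induced n (Wulff n g).

Lemma T_hat n g x : Wulff n g x -> Tset n g (hatv n x).
Proof.
  intros H. split; [apply hat_sphere|split]. rewrite hat_k; apply cst_pos.
  apply (G_ext n g x); auto. intros i Hi. symmetry. apply (hat_proj n x i Hi).
Qed.

Lemma T_inv n g X : Tset n g X -> on_sphere (S (S n)) X /\ 0 < X (S n) /\ Wulff n g (proj n X).
Proof. intros [H1 [H2 H3]]. auto. Qed.

Lemma Dp_ext n g a b : (forall i, (i < S n)%nat -> a i = b i) -> Dp n g a -> Dp n g b.
Proof. intros E H y Hy. rewrite <- (dot_extl (S n) a b y); auto. Qed.

Lemma T_closed n g (gpos : forall t, on_sphere (S n) t -> 0 < g t) Q :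
  sph_boundary (S (S n)) (Tset n g) Q -> Tset n g Q.
Proof.
  intros [HQ Hb].
  assert (Tp: forall t, on_sphere (S n) t -> dot (S n) Q t <= g t * Q (S n)).
  { intros t Ht. apply Rnot_lt_le; intros Hc. pose proof (gpos t Ht).
    set (c := dot (S n) Q t - g t * Q (S n)).
    destruct (Hb (c / (1 + g t)) ltac:(unfold c; apply Rdiv_lt_0_compat; lra))
      as [[Y [HY1 [HY2 HY3]]] _].
    destruct (T_inv n g Y HY3) as [_ [Yk GY]].
    specialize (GY t Ht).
    assert (E: dot (S n) Y t = Y (S n) * dot (S n) (proj n Y) t).
    { rewrite <- dot_scal. apply dot_extl. intros; unfold proj; field; lra. }
    assert (dot (S n) Y t <= g t * Y (S n)) by nra.
    pose proof (dot_diff_bound (S n) t Y Q Ht). rewrite !(dot_comm (S n) t) in H1.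
    pose proof (vnorm_le_S (S n) (vsub Y Q)).
    pose proof (coord_le_norm (S (S n)) (vsub Y Q) (S n) ltac:(lia)). unfold vsub in H3 at 1.
    apply abs_le in H1. apply abs_le in H3.
    set (e := c / (1 + g t)) in *.
    assert (Ee: e * (1 + g t) = c) by (unfold e; field; lra).
    assert (g t * (Y (S n) - Q (S n)) >= - (g t * e)).
    { assert (Y (S n) - Q (S n) >= - e) by lra. nra. }
    assert (dot (S n) Q t < dot (S n) Y t + e) by lra.
    unfold c in Ee. nra. }
  assert (Qk: 0 < Q (S n)).
  { apply Rnot_le_lt; intros Hc.
    destruct (Req_dec (dot (S n) Q Q) 0) as [E|E].
    - assert (Qk: Q (S n) = -1).
      { unfold on_sphere in HQ. change (dot (S n) Q Q + Q (S n) * Q (S n) = 1) in HQ. nra. }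
      set (e := fun i => if Nat.eq_dec i n then 1 else 0).
      assert (He: on_sphere (S n) e).
      { unfold on_sphere. change (dot n e e + e n * e n = 1).
        rewrite dot_zero_l. unfold e. destruct Nat.eq_dec; [ring|lia].
        intros i Hi. unfold e. destruct Nat.eq_dec; [lia|auto]. }
      specialize (Tp e He). pose proof (gpos e He).
      pose proof (CS_abs (S n) Q e). unfold vnorm at 1 in H0. rewrite E, sqrt_0 in H0.
      apply abs_le in H0. nra.
    - pose proof (dot_nonneg (S n) Q).
      assert (Hp: 0 < vnorm (S n) Q) by (apply vnorm_pos; lra).
      specialize (Tp _ (normz_sphere _ _ Hp)). rewrite normz_dot in Tp by auto.
      pose proof (gpos _ (normz_sphere _ _ Hp)). nra. }
  split; auto. split; auto. intros t Ht. specialize (Tp t Ht).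
  unfold proj. rewrite (dot_extl (S n) (fun i => Q i / Q (S n)) (fun i => / Q (S n) * Q i))
    by (intros; unfold Rdiv; ring).
  rewrite dot_scal. apply (Rmult_le_reg_l (Q (S n))); auto.
  rewrite <- Rmult_assoc, Rinv_r by lra. lra.
Qed.

Lemma vnorm_vscal m a x : vnorm m (vscal a x) = Rabs a * vnorm m x.
Proof.
  unfold vnorm. rewrite dot_vscal_l, dot_comm, dot_vscal_l, <- Rmult_assoc.
  rewrite sqrt_mult_alt by (pose proof (Rle_0_sqr a); unfold Rsqr in *; lra).
  rewrite <- Rsqr_def, sqrt_Rsqr_abs. auto.
Qed.

Lemma pol_k_pos n g (gpos : forall t, on_sphere (S n) t -> 0 < g t)
  (gcont : cont_on_sphere (S n) g) P :
  on_sphere (S (S n)) P -> (forall X, Tset n g X -> hemi (S (S n)) P X) -> 0 < P (S n).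
Proof.
  intros HP Hsub. apply Rnot_le_lt; intros Hc.
  destruct (Rle_lt_or_eq_dec _ _ Hc) as [Hl|He].
  - destruct (Hsub _ (T_hat n g _ (G0 n g gpos))) as [_ H].
    change (0 <= dot (S n) P (hatv n (fun _ => 0)) + P (S n) * hatv n (fun _ => 0) (S n)) in H.
    rewrite dot_comm, hat_dotk, dot_zero_l in H by auto. rewrite hat_k in H.
    pose proof (cst_pos n (fun _ => 0)). nra.
  - destruct (ball0 n g gpos gcont) as [d [Hd Hd2]].
    assert (HPk: dot (S n) P P = 1).
    { unfold on_sphere in HP. change (dot (S n) P P + P (S n) * P (S n) = 1) in HP.
      rewrite He in HP. lra. }
    set (y := vscal (- d) P).
    assert (Gy: Wulff n g y).
    { apply Hd2. unfold y. rewrite vnorm_vscal. unfold vnorm. rewrite HPk, sqrt_1.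
      rewrite Rabs_left by lra. lra. }
    destruct (Hsub _ (T_hat n g _ Gy)) as [_ H].
    change (0 <= dot (S n) P (hatv n y) + P (S n) * hatv n y (S n)) in H.
    rewrite He, dot_comm, hat_dotk in H. unfold y in H.
    rewrite dot_vscal_l, HPk in H. pose proof (cst_pos n (vscal (- d) P)). nra.
Qed.

Lemma pol_Dp n g P : 0 < P (S n) ->
  ((forall X, Tset n g X -> hemi (S (S n)) P X) <-> Dp n g (proj n P)).
Proof.
  intros Hk. split.
  - intros Hsub y Hy. destruct (Hsub _ (T_hat n g y Hy)) as [_ H].
    rewrite dot_proj in H by (try rewrite hat_k; pose proof (cst_pos n y); lra).
    rewrite hat_k in H.
    rewrite (dot_ext (S n) (proj n P) (proj n P) (proj n (hatv n y)) y) in H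
      by (intros; split; [auto|apply hat_proj; auto]).
    pose proof (cst_pos n y).
    assert (0 <= dot (S n) (proj n P) y + 1).
    { apply (Rmult_le_reg_l (P (S n) * cst n y)). apply Rmult_lt_0_compat; lra. rewrite Rmult_0_r. lra. }
    lra.
  - intros HD X HX. destruct (T_inv n g X HX) as [HXs [HXk GX]]. split; auto.
    rewrite dot_proj by lra. specialize (HD _ GX). apply Rmult_le_pos; [apply Rmult_le_pos|]; lra.
Qed.

Lemma supp_hat n g p y0 : Dp n g p -> Wulff n g y0 -> dot (S n) y0 p = -1 ->
  supports (S (S n)) (Tset n g) (hatv n p).
Proof.
  intros HD Gy Hd. pose proof (cst_pos n p) as cp. pose proof (cst_pos n y0) as cy.
  assert (Hsub: forall X, Tset n g X -> hemi (S (S n)) (hatv n p) X).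
  { apply pol_Dp. rewrite hat_k; auto. apply (Dp_ext n g p); auto.
    intros; symmetry; apply hat_proj; auto. }
  assert (H0: dot (S (S n)) (hatv n p) (hatv n y0) = 0).
  { rewrite dot_proj by (rewrite hat_k; lra). rewrite !hat_k.
    rewrite (dot_ext (S n) _ p _ y0) by (intros; split; apply hat_proj; auto).
    rewrite dot_comm, Hd. ring. }
  pose proof (T_hat n g y0 Gy) as TQ.
  split; [apply hat_sphere|split; auto].
  exists (hatv n y0). split.
  - split; [apply hat_sphere|]. intros eps He. split.
    + exists (hatv n y0). split; [apply hat_sphere|]. rewrite vnorm_self. auto.
    + destruct (outpoint _ _ _ (hat_sphere n p) (hat_sphere n y0) H0 eps He) as [Y [HY1 [HY2 HY3]]].
      exists Y. split; auto. split; auto. intros TY. destruct (Hsub Y TY). lra.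
  - split; [apply hat_sphere|]. intros eps He. split.
    + exists (hatv n y0). split; [apply hat_sphere|]. rewrite vnorm_self. split; [auto|].
      split; [apply hat_sphere|lra].
    + destruct (outpoint _ _ _ (hat_sphere n p) (hat_sphere n y0) H0 eps He) as [Y [HY1 [HY2 HY3]]].
      exists Y. split; auto. split; auto. intros [_ HY]. lra.
Qed.

Lemma SUPP n g (gpos : forall t, on_sphere (S n) t -> 0 < g t)
  (gcont : cont_on_sphere (S n) g) z : 0 < dot (S n) z z ->
  exists mu y0, 0 < mu /\ Wulff n g y0 /\ dot (S n) y0 z = - mu /\
    (forall y, Wulff n g y -> dot (S n) y0 z <= dot (S n) y z) /\
    Dp n g (vscal (/ mu) z) /\ dot (S n) y0 (vscal (/ mu) z) = -1.
Proof.
  intros Hz. destruct (MIN n g gpos gcont z) as [y0 [Gy0 Hmin]].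
  destruct (ball0 n g gpos gcont) as [d [Hd Hd2]].
  assert (Hp: 0 < vnorm (S n) z) by (apply vnorm_pos; auto).
  set (y1 := vscal (- d) (normz (S n) z)).
  assert (G1: Wulff n g y1).
  { apply Hd2. unfold y1. rewrite vnorm_vscal, (vnorm_sphere _ _ (normz_sphere _ _ Hp)).
    rewrite Rabs_left by lra. lra. }
  assert (E1: dot (S n) y1 z = - d * vnorm (S n) z).
  { unfold y1. rewrite dot_vscal_l, dot_comm, normz_dot; auto. }
  specialize (Hmin y1 G1) as Hm1.
  exists (- dot (S n) y0 z), y0.
  assert (Hmu: 0 < - dot (S n) y0 z) by nra.
  split; auto. split; auto. split; [ring|]. split; auto. split.
  - intros y Hy. rewrite dot_vscal_l. specialize (Hmin y Hy). rewrite (dot_comm _ z y).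
    set (mu := - dot (S n) y0 z) in *.
    assert (H1: / mu * (- mu) = -1) by (field; lra).
    assert (0 < / mu) by (apply Rinv_0_lt_compat; lra).
    assert (/ mu * (- mu) <= / mu * dot (S n) y z) by (apply Rmult_le_compat_l; [lra|unfold mu; lra]).
    lra.
  - rewrite dot_comm, dot_vscal_l, dot_comm. field. rewrite (dot_comm _ z y0). intro; lra.
Qed.

Lemma vscal_back (mu : R) (z : vec) : mu <> 0 -> forall i, vscal mu (vscal (/ mu) z) i = z i.
Proof. intros H i. unfold vscal. field. auto. Qed.

Theorem theorem1 (n : nat) (hn : (1 <= n)%nat) (g : vec -> R)
  (gpos : forall t, on_sphere (S n) t -> 0 < g t)
  (gcont : cont_on_sphere (S n) g) :
  (forall x, Wulff n g x <-> dual_Wulff n g x) <->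
  constant_width (S (S n)) (induced n (Wulff n g)) (PI / 2).
Proof.
  change (induced n (Wulff n g)) with (Tset n g).
  assert (EQ: (forall x, Wulff n g x <-> dual_Wulff n g x) <-> (forall x, Wulff n g x <-> Dp n g x)).
  { split; intros H x; rewrite H; split; [apply dual_to_Dp; auto|apply Dp_to_dual|
      apply Dp_to_dual|apply dual_to_Dp; auto]. }
  rewrite EQ. clear EQ. split.
  -
    intros HG.
    assert (TT: forall X Y, Tset n g X -> Tset n g Y -> 0 <= dot (S (S n)) X Y).
    { intros X Y HX HY. destruct (T_inv n g X HX) as [_ [Xk GX]].
      destruct (T_inv n g Y HY) as [_ [Yk GY]].
      rewrite dot_proj by lra. apply HG in GX. specialize (GX _ GY).
      apply Rmult_le_pos; [apply Rmult_le_pos|]; lra. }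
    assert (PolT: forall P, on_sphere (S (S n)) P ->
      (forall X, Tset n g X -> hemi (S (S n)) P X) -> Tset n g P).
    { intros P HP Hsub. pose proof (pol_k_pos n g gpos gcont P HP Hsub) as Pk.
      split; auto. split; auto. apply HG. apply pol_Dp; auto. }
    intros P [HP [Hsub [Q0 [bT bH]]]].
    pose proof (T_closed n g gpos Q0 bT) as TQ0.
    pose proof (T_inv n g Q0 TQ0) as [HQ0 _].
    assert (d0: dot (S (S n)) P Q0 = 0).
    { apply bnd_hemi_zero; auto. }
    assert (d0': dot (S (S n)) Q0 P = 0) by (rewrite dot_comm; auto).
    pose proof (PolT P HP Hsub) as TP.
    split.
    + exists Q0. split; [split; [|split; [|split]]|].
      * split; auto. split.
        { intros X HX. split. apply (T_inv n g X HX). apply TT; auto. }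
        exists P. split.
        -- split; auto. intros eps He. split.
           ++ exists P. rewrite vnorm_self. auto.
           ++ destruct (outpoint _ _ _ HQ0 HP d0' eps He) as [Y [HY1 [HY2 HY3]]].
              exists Y. split; auto. split; auto. intros TY. pose proof (TT Q0 Y TQ0 TY). lra.
        -- split; auto. intros eps He. split.
           ++ exists P. rewrite vnorm_self. split; [auto|]. split; [auto|]. split; [auto|lra].
           ++ destruct (outpoint _ _ _ HQ0 HP d0' eps He) as [Y [HY1 [HY2 HY3]]].
              exists Y. split; auto. split; auto. intros [_ HY]. lra.
      * intros X HX. split; [apply Hsub; auto|]. split. apply (T_inv n g X HX). apply TT; auto.
      * intros E. rewrite (dot_ext (S (S n)) P P Q0 P) in d0 by (intros; split; auto; apply E; auto).
        unfold on_sphere in HP. lra.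
      * intros E. rewrite (dot_ext (S (S n)) P P Q0 (vopp P)) in d0 by (intros; split; auto; apply E; auto).
        rewrite dot_comm, dot_opp_l in d0. unfold on_sphere in HP. lra.
      * unfold arc_len. rewrite d0, acos_0. field.
    + intros Q [[HQs [HQsub _]] [Hsub2 _]].
      pose proof (PolT Q HQs HQsub) as TQ.
      destruct (Hsub2 Q TQ) as [[_ HPQ] _].
      apply acos_ge; auto. apply dot_sphere_bound; auto.
  -
    intros CW.
    assert (DD: forall x d, Dp n g x -> Dp n g d -> -1 <= dot (S n) x d).
    { intros x d Hx Hd.
      destruct (Req_dec (dot (S n) x x) 0) as [Ex|Ex].
      { rewrite dot_zero_l; [lra|]. apply dot_zero; auto. }
      destruct (Req_dec (dot (S n) d d) 0) as [Ed|Ed].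
      { rewrite dot_comm, dot_zero_l; [lra|]. apply dot_zero; auto. }
      pose proof (dot_nonneg (S n) x). pose proof (dot_nonneg (S n) d).
      destruct (SUPP n g gpos gcont x ltac:(lra)) as [mx [yx [Hmx [Gyx [Eyx [_ [Dpx Epx]]]]]]].
      destruct (SUPP n g gpos gcont d ltac:(lra)) as [md [yd [Hmd [Gyd [Eyd [_ [Dpd Epd]]]]]]].
      assert (mx <= 1) by (specialize (Hx _ Gyx); rewrite dot_comm in Hx; lra).
      assert (md <= 1) by (specialize (Hd _ Gyd); rewrite dot_comm in Hd; lra).
      set (p := vscal (/ mx) x) in *. set (q := vscal (/ md) d) in *.
      assert (Exd: dot (S n) x d = mx * md * dot (S n) p q).
      { rewrite (dot_ext (S n) x (vscal mx p) d (vscal md q))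
          by (intros; split; symmetry; apply vscal_back; lra).
        rewrite dot_vscal_l, dot_comm, dot_vscal_l, dot_comm. ring. }
      pose proof (supp_hat n g p yx Dpx Gyx Epx) as SP.
      pose proof (supp_hat n g q yd Dpd Gyd Epd) as SQ.
      destruct (classic (veq (S (S n)) (hatv n q) (hatv n p))) as [V|V].
      - assert (Epq: dot (S n) p q = dot (S n) p p).
        { apply dot_ext. intros i Hi. split; auto.
          rewrite <- (hat_proj n q i Hi), <- (hat_proj n p i Hi). unfold proj.
          rewrite !V by lia. auto. }
        pose proof (dot_nonneg (S n) p). rewrite Exd, Epq. apply Rle_trans with 0; [lra|]. apply Rmult_le_pos; [apply Rmult_le_pos|]; lra.
      - assert (adm: supports (S (S n)) (Tset n g) (hatv n q) /\
          (forall X, Tset n g X -> hemi (S (S n)) (hatv n p) X /\ hemi (S (S n)) (hatv n q) X) /\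
          ~ veq (S (S n)) (hatv n q) (hatv n p) /\ ~ veq (S (S n)) (hatv n q) (vopp (hatv n p))).
        { split; auto. split. intros X HX. split; [apply SP|apply SQ]; auto.
          split; auto. intros E. specialize (E (S n) ltac:(lia)). unfold vopp in E.
          rewrite !hat_k in E. pose proof (cst_pos n p). pose proof (cst_pos n q). lra. }
        destruct (CW _ SP) as [_ Hmin]. specialize (Hmin _ adm).
        apply acos_ge in Hmin; [|apply dot_sphere_bound; apply hat_sphere].
        rewrite dot_proj in Hmin by (rewrite hat_k; pose proof (cst_pos n p); pose proof (cst_pos n q); lra).
        rewrite !hat_k in Hmin.
        rewrite (dot_ext (S n) _ p _ q) in Hmin by (intros; split; apply hat_proj; auto).
        pose proof (cst_pos n p). pose proof (cst_pos n q).
        assert (-1 <= dot (S n) p q).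
        { assert (0 <= dot (S n) p q + 1); [|lra].
          apply (Rmult_le_reg_l (cst n p * cst n q)). apply Rmult_lt_0_compat; lra.
          rewrite Rmult_0_r. lra. }
        rewrite Exd. assert (0 < mx * md <= 1) by (split; [apply Rmult_lt_0_compat|]; nra).
        destruct (Rle_or_lt 0 (dot (S n) p q)); nra. }
    assert (DG: forall x, Dp n g x -> Wulff n g x).
    { intros x Hx t Ht. pose proof (gpos t Ht).
      assert (Hdt: Dp n g (vscal (- / g t) t)).
      { intros y Hy. rewrite dot_vscal_l. specialize (Hy t Ht). rewrite dot_comm.
        assert (0 < / g t) by (apply Rinv_0_lt_compat; lra).
        assert (Hq: / g t * dot (S n) y t <= / g t * g t) by (apply Rmult_le_compat_l; lra).
        rewrite Rinv_l in Hq by lra. lra. }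
      specialize (DD x _ Hx Hdt). rewrite dot_comm, dot_vscal_l, dot_comm in DD.
      assert (0 < / g t) by (apply Rinv_0_lt_compat; lra).
      apply (Rmult_le_reg_l (/ g t)); auto. rewrite Rinv_l by lra. lra. }
    intros x. split; [|apply DG].
    intros Gx z Gz.
    destruct (Req_dec (dot (S n) z z) 0) as [Ez|Ez].
    { rewrite dot_comm, dot_zero_l; [lra|]. apply dot_zero; auto. }
    pose proof (dot_nonneg (S n) z).
    destruct (SUPP n g gpos gcont z ltac:(lra)) as [mu [y0 [Hmu [Gy0 [Ey0 [Hmin [Dpp Epp]]]]]]].
    set (p := vscal (/ mu) z) in *.
    pose proof (supp_hat n g p y0 Dpp Gy0 Epp) as SP.
    destruct (CW _ SP) as [[Q [[SQ [Hsub _]] HQ]] _].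
    destruct SQ as [HQs [HQsub _]].
    apply acos_eq in HQ; [|apply dot_sphere_bound; auto; apply hat_sphere].
    pose proof (pol_k_pos n g gpos gcont Q HQs HQsub) as Qk.
    apply (pol_Dp n g Q Qk) in HQsub.
    set (q := proj n Q) in *.
    rewrite dot_proj in HQ by (try rewrite hat_k; pose proof (cst_pos n p); lra).
    rewrite hat_k in HQ. pose proof (cst_pos n p).
    rewrite (dot_ext (S n) _ p q q) in HQ by (intros; split; [apply hat_proj|]; auto).
    assert (Epq: dot (S n) p q = -1).
    { assert (cst n p * Q (S n) <> 0) by (apply Rgt_not_eq, Rmult_lt_0_compat; lra).
      apply Rmult_integral in HQ. destruct HQ; [contradiction|lra]. }
    assert (Eqz: dot (S n) q z = - mu).
    { rewrite (dot_comm _ q z), (dot_extl (S n) z (vscal mu p) q) by (intros; symmetry; apply vscal_back; lra).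
      rewrite dot_vscal_l, Epq. ring. }
    specialize (Hmin x Gx). specialize (HQsub z Gz). lra.
Qed.
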